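(* For every positive integer $n\neq 4$, $\mathrm{ex}(n,M_2,P_4)=\mathcal{N}(M_2,D(3,n))$, and $\mathrm{ex}(4,M_2,P_4)=1$.
   Context: $M_2$ is the matching with two edges, $P_4$ the path on $4$ vertices (three edges). $D(k,n)$ is the graph on $n$ vertices consisting of $\lfloor n/k\rfloor$ vertex-disjoint copies of $K_k$ and a clique on the remaining $n-k\lfloor n/k\rfloor$ vertices. For graphs $H,G$, $\mathcal{N}(H,G)$ is the number of subgraphs of $G$ isomorphic to $H$, and $\mathrm{ex}(n,H,F)$ is the maximum of $\mathcal{N}(H,G)$ over $F$-free graphs $G$ on $n$ vertices. *)

(* Defs.v *)
From mathcomp Require Import all_boot.
Set Implicit Arguments. Unset Strict Implicit. Unset Printing Implicit Defensive.

Definition graph n := {set {set 'I_n}}.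

Definition simple_graph n (E : graph n) : bool :=
  [forall e in E, #|e| == 2].

Definition N_M2 n (E : graph n) : nat :=
  #|[set F in powerset E | (#|F| == 2) &&
       [forall e in F, forall f in F, (e != f) ==> [disjoint e & f]]]|.

Definition has_P4 n (E : graph n) : bool :=
  [exists a : 'I_n, exists b : 'I_n, exists c : 'I_n, exists d : 'I_n,
    [&& uniq [:: a; b; c; d], [set a; b] \in E, [set b; c] \in E
      & [set c; d] \in E]].

Definition P4_free n (E : graph n) : bool := ~~ has_P4 E.

Definition ex_M2_P4 n : nat :=
  \max_(E : graph n | simple_graph E && P4_free E) N_M2 E.

(* D(k,n): vertices i, j adjacent iff i <> j and they lie in the same block
   {k*q, ..., k*q+k-1}; this gives floor(n/k) disjoint K_k's and a clique on
   the remaining n - k*floor(n/k) vertices. *)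
Definition D k n : graph n :=
  [set e : {set 'I_n} | [exists i : 'I_n, exists j : 'I_n,
     [&& i != j, i %/ k == j %/ k & e == [set i; j]]]].

(* Main.v *)
Require Import Defs.
From mathcomp Require Import all_boot zify.
From Stdlib Require Import Lia.
Set Implicit Arguments. Unset Strict Implicit. Unset Printing Implicit Defensive.

Definition deg n (E : graph n) (v : 'I_n) := #|[set e in E | v \in e]|.

Lemma edge_form n (E : graph n) e : simple_graph E -> e \in E ->
  exists x y, x != y /\ e = [set x; y].
Proof. by move=> /forall_inP H /H /cards2P. Qed.

Lemma edge_at n (E : graph n) e v : simple_graph E -> e \in E -> v \in e ->
  exists u, u != v /\ e = [set v; u].
Proof.
move=> sE eE ve; have [x [y [xy He]]] := edge_form sE eE.
move: ve; rewrite He !inE; case/orP => /eqP ->; first by exists y; rewrite eq_sym.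
by exists x; split => //; rewrite setUC.
Qed.

Lemma sum_set2 n (x y : 'I_n) (w : 'I_n -> nat) : x != y ->
  \sum_(v in [set x; y]) w v = w x + w y.
Proof.
move=> xy; rewrite big_setU1 /= ?big_set1 //; by rewrite inE.
Qed.

Lemma deg_sum n (E : graph n) v : deg E v = \sum_(e in E) (v \in e).
Proof.
rewrite /deg -sum1_card big_mkcond /= [RHS]big_mkcond /=.
by apply: eq_bigr => e _; rewrite inE; case: (e \in E); case: (v \in e).
Qed.

Lemma wshake n (E : graph n) (w : 'I_n -> nat) :
  \sum_v w v * deg E v = \sum_(e in E) \sum_(v in e) w v.
Proof.
under eq_bigr => v _ do rewrite deg_sum big_distrr /=.
rewrite exchange_big /=; apply: eq_bigr => e _.
rewrite [RHS]big_mkcond /=; apply: eq_bigr => v _.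
by case: (v \in e); rewrite ?muln1 ?muln0.
Qed.

Lemma disj2 n (x y : 'I_n) (f : {set 'I_n}) :
  [disjoint [set x; y] & f] = (x \notin f) && (y \notin f).
Proof.
by rewrite disjoints_subset subUset !sub1set !inE.
Qed.

Lemma pair_deg n (E : graph n) x y : simple_graph E -> x != y -> [set x; y] \in E ->
  deg E x + deg E y + \sum_(f in E) [disjoint [set x; y] & f] = #|E| + 1.
Proof.
move=> sE xy eE; rewrite !deg_sum -!big_split /=.
rewrite (eq_bigr (fun f => 1 + (f == [set x; y]))); last first.
  move=> f fE; rewrite disj2.
  case: eqP => [->|fne]; first by rewrite !inE !eqxx orbT.
  case xf: (x \in f); case yf: (y \in f) => //=.
  have [u [ux fu]] := edge_at sE fE xf.
  move: yf; rewrite fu !inE eq_sym (negbTE xy) /= => /eqP yu.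
  by move: fne; rewrite fu yu.
rewrite big_split /= sum1_card; congr (_ + _).
by rewrite (bigD1 [set x; y]) //= eqxx big1 // => f /andP[_ /negbTE->].
Qed.

Definition Dis n (E : graph n) (e : {set 'I_n}) := \sum_(f in E) [disjoint e & f].

Lemma sqdeg n (E : graph n) : simple_graph E ->
  \sum_v deg E v * deg E v + \sum_(e in E) Dis E e = #|E| * (#|E| + 1).
Proof.
move=> sE; rewrite wshake -big_split /=.
rewrite (eq_bigr (fun _ => #|E| + 1)) ?sum_nat_const //.
move=> e eE; have [x [y [xy He]]] := edge_form sE eE.
by rewrite /Dis He sum_set2 // pair_deg // -He.
Qed.

Lemma sum_bool_card (T : finType) (A : {pred T}) (P : pred T) :
  \sum_(x in A) (P x : nat) = #|[set x in A | P x]|.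
Proof.
rewrite -sum1_card big_mkcond [RHS]big_mkcond /=; apply: eq_bigr => x _.
by rewrite !inE; case: (x \in A); case: (P x).
Qed.

Definition M2set n (E : graph n) := [set F in powerset E | (#|F| == 2) &&
       [forall e in F, forall f in F, (e != f) ==> [disjoint e & f]]].

Lemma M2set_through n (E : graph n) e : simple_graph E -> e \in E ->
  [set F in M2set E | e \in F] =
  [set [set e; f] | f in [set f in E | [disjoint e & f]]].
Proof.
move=> sE eE; have e2 : #|e| = 2 by move/forall_inP: sE => /(_ e eE) /eqP.
have ene : forall f : {set 'I_n}, [disjoint e & f] -> e != f.
  move=> f; apply: contraTneq => <-; rewrite -setI_eq0 setIid.
  by apply/eqP => e0; move: e2; rewrite e0 cards0.
apply/setP => F; rewrite !inE; apply/andP/imsetP.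
- case=> /andP[FE /andP[/cards2P[a [b [ab Fab]]] Hd]] eF.
  move: eF; rewrite Fab !inE => /orP[]/eqP ea.
  + exists b; last by rewrite ea.
    rewrite inE; apply/andP; split; first by move/subsetP: FE; apply; rewrite Fab !inE eqxx orbT.
    by move/forall_inP: Hd => /(_ a); rewrite Fab !inE eqxx /= => /(_ isT) /forall_inP /(_ b);
       rewrite !inE eqxx orbT ab ea => /(_ isT).
  + exists a; last by rewrite ea setUC.
    rewrite inE; apply/andP; split; first by move/subsetP: FE; apply; rewrite Fab !inE eqxx.
    by move/forall_inP: Hd => /(_ b); rewrite Fab !inE eqxx orbT => /(_ isT) /forall_inP /(_ a);
       rewrite !inE eqxx /= eq_sym ab ea => /(_ isT).
- case=> f; rewrite inE => /andP[fE dj] ->; split; last by rewrite !inE eqxx.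
  apply/andP; split.
    by apply/subsetP => g; rewrite !inE => /orP[]/eqP->.
  apply/andP; split; first by rewrite cards2 ene.
  apply/forall_inP => g; rewrite !inE => /orP[]/eqP->; apply/forall_inP => h;
    rewrite !inE => /orP[]/eqP->; by rewrite ?eqxx //= ?dj ?(disjoint_sym f e) ?dj ?implybT.
Qed.

Lemma Dis_sum n (E : graph n) : simple_graph E ->
  \sum_(e in E) Dis E e = 2 * N_M2 E.
Proof.
move=> sE.
have -> : N_M2 E = #|M2set E| by [].
have H1 : \sum_(F in M2set E) #|F| = 2 * #|M2set E|.
  rewrite -sum1_card big_distrr /=; apply: eq_bigr => F.
  by rewrite inE => /andP[_ /andP[/eqP-> _]].
rewrite -H1.
have H2 : \sum_(F in M2set E) #|F| = \sum_e \sum_(F in M2set E) (e \in F : nat).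
  rewrite exchange_big /=; apply: eq_bigr => F _.
  by rewrite sum_bool_card; apply: eq_card => x; rewrite !inE.
rewrite H2 [RHS](bigID (fun e => e \in E)) /= [X in _ = _ + X]big1; last first.
  move=> e eE; apply: big1 => F; rewrite inE => /andP[FE _].
  rewrite powersetE in FE; case eF: (e \in F) => //; by rewrite (subsetP FE _ eF) in eE.
rewrite addn0; apply: eq_bigr => e eE.
rewrite sum_bool_card M2set_through // card_in_imset /Dis ?sum_bool_card //.
move=> f g; rewrite !inE => /andP[_ df] /andP[_ dg] efg.
have ef : e != f.
  apply: contraTneq df => <-; rewrite -setI_eq0 setIid.
  have : #|e| = 2 by move/forall_inP: sE => /(_ e eE) /eqP.
  by move=> e2; apply/eqP => e0; move: e2; rewrite e0 cards0.
have : f \in [set e; g] by rewrite -efg !inE eqxx orbT.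
by rewrite !inE eq_sym (negbTE ef) /= => /eqP.
Qed.

Lemma edge_neq n (E : graph n) a b : simple_graph E -> [set a; b] \in E -> a != b.
Proof.
by move=> /forall_inP H /H; rewrite cards2; case: (a != b).
Qed.

Lemma noP4 n (E : graph n) a b c d : P4_free E -> uniq [:: a; b; c; d] ->
  [set a; b] \in E -> [set b; c] \in E -> [set c; d] \in E -> False.
Proof.
move=> /negP H u e1 e2 e3; apply: H; apply/existsP; exists a; apply/existsP; exists b;
apply/existsP; exists c; apply/existsP; exists d; by rewrite u e1 e2 e3.
Qed.

Definition tri n (E : graph n) (v : 'I_n) : bool :=
  [exists a, exists b, [&& [set v; a] \in E, [set v; b] \in E & [set a; b] \in E]].

Lemma tri_nbrs n (E : graph n) v a b c : simple_graph E -> P4_free E ->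
  [set v; a] \in E -> [set v; b] \in E -> [set a; b] \in E -> [set v; c] \in E ->
  c = a \/ c = b.
Proof.
move=> sE pE va vb ab vc.
case: (eqVneq c a) => [->|ca]; first by left.
case: (eqVneq c b) => [->|cb]; first by right.
exfalso; apply: (@noP4 _ E c v a b pE _ _ va ab); last by rewrite setUC.
have := edge_neq sE va; have := edge_neq sE vb; have := edge_neq sE ab; have := edge_neq sE vc.
move=> h1 h2 h3 h4; rewrite /= !inE !negb_or (eq_sym c v) h1 ca cb h4 h3 h2.
done.
Qed.

Lemma triP n (E : graph n) v : reflect (exists a b, [/\ [set v; a] \in E, [set v; b] \in E & [set a; b] \in E]) (tri E v).
Proof.
apply: (iffP existsP) => [[a /existsP[b /and3P[h1 h2 h3]]]|[a [b [h1 h2 h3]]]].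
  by exists a, b.
by exists a; apply/existsP; exists b; rewrite h1 h2 h3.
Qed.

Lemma in_deg n (E : graph n) v e : e \in E -> v \in e -> 0 < deg E v.
Proof.
move=> eE ve; rewrite /deg card_gt0; apply/set0Pn; exists e; by rewrite inE eE ve.
Qed.

Lemma tri_deg n (E : graph n) v : simple_graph E -> P4_free E -> tri E v -> deg E v = 2.
Proof.
move=> sE pE /triP[a [b [va vb ab]]].
rewrite /deg.
have -> : [set e in E | v \in e] = [set [set v; a]; [set v; b]].
  apply/setP => e; rewrite !inE; apply/andP/orP.
    case=> eE ve; have [u [uv He]] := edge_at sE eE ve; rewrite He in eE *.
    by case: (tri_nbrs sE pE va vb ab eE) => ->; [left|right].
  by case => /eqP ->; split => //; rewrite !inE eqxx.
rewrite cards2; suff -> : [set v; a] != [set v; b] by []; apply/eqP => H.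
have : a \in [set v; b] by rewrite -H !inE eqxx orbT.
rewrite !inE => /orP[]/eqP H'.
  by move: (edge_neq sE va); rewrite H' eqxx.
by move: (edge_neq sE ab); rewrite H' eqxx.
Qed.

Lemma other_edge n (E : graph n) u x : 1 < deg E u ->
  exists e, [/\ e \in E, u \in e & e != x].
Proof.
rewrite /deg (cardsD1 x); case: (set_0Vmem ([set e in E | u \in e] :\ x)) => [->|[e]].
  by rewrite cards0 addn0; case: (x \in _).
by rewrite !inE => /and3P[ex eE ue] _; exists e.
Qed.

Lemma other_nbr n (E : graph n) u v : simple_graph E -> 1 < deg E u ->
  exists w, [/\ [set u; w] \in E, w != u & w != v].
Proof.
move=> sE /(other_edge [set u; v]) [e [eE ue ne]].
have [w [wu He]] := edge_at sE eE ue; exists w; split => //; first by rewrite -He.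
by apply: contraNneq ne => wv; rewrite He wv.
Qed.

Lemma factP n (E : graph n) u v : simple_graph E -> P4_free E -> [set u; v] \in E ->
  1 < deg E u -> 1 < deg E v -> tri E u.
Proof.
move=> sE pE uv du dv.
have [w [uw wu wv]] := other_nbr v sE du.
have [x [vx xv xu]] := other_nbr u sE dv.
case: (eqVneq w x) => [wx|wx].
  apply/triP; exists v, w; split => //; by rewrite wx.
exfalso; apply: (@noP4 _ E w u v x pE _ _ uv vx); last by rewrite setUC.
have := edge_neq sE uv.
move=> h; rewrite /= !inE !negb_or wu wv wx h (eq_sym u x) xu (eq_sym v x) xv.
done.
Qed.

Lemma set2C (T : finType) (a b : T) : [set a; b] = [set b; a].
Proof. exact: setUC. Qed.

Definition nb n (E : graph n) (v : 'I_n) := [set u | (u == v) || ([set v; u] \in E)].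

Lemma nb_tri n (E : graph n) v a b : simple_graph E -> P4_free E ->
  [set v; a] \in E -> [set v; b] \in E -> [set a; b] \in E -> nb E v = [set v; a; b].
Proof.
move=> sE pE va vb ab; apply/setP => u; rewrite !inE; apply/orP/idP.
  case=> [->//|vu]; case: (tri_nbrs sE pE va vb ab vu) => ->; by rewrite eqxx ?orbT.
case/orP => [/orP[]|] /eqP ->; rewrite ?eqxx; [by left|by right|by right].
Qed.

Lemma card3 n (v a b : 'I_n) : v != a -> v != b -> a != b -> #|[set v; a; b]| = 3.
Proof.
move=> va vb ab; rewrite -setUA cardsU1 cards2 ab !inE negb_or va vb.
by [].
Qed.

Lemma tri_card3 n (E : graph n) : simple_graph E -> P4_free E ->
  3 %| #|[set v | tri E v]|.
Proof.
move=> sE pE; set T := [set v | tri E v].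
rewrite (card_partition (preim_partitionP (nb E) T)).
rewrite (eq_bigr (fun _ => 3)) ?sum_nat_const ?dvdn_mull //.
move=> B; rewrite /preim_partition /equivalence_partition => /imsetP[x].
rewrite inE => /triP[a [b [xa xb ab]]] ->.
have na := edge_neq sE xa; have nb' := edge_neq sE xb; have nab := edge_neq sE ab.
have Hx := nb_tri sE pE xa xb ab.
have Ha : nb E a = [set x; a; b].
  rewrite (nb_tri sE pE (_ : [set a; x] \in E) ab xb); last by rewrite setUC.
  by apply/setP => u; rewrite !inE; case: (u == a); case: (u == x); case: (u == b).
have Hb : nb E b = [set x; a; b].
  rewrite (nb_tri sE pE (_ : [set b; x] \in E) (_ : [set b; a] \in E) xa); last 2 first.
    by rewrite setUC. by rewrite setUC.
  by apply/setP => u; rewrite !inE; case: (u == a); case: (u == x); case: (u == b).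
have -> : [set y in T | nb E x == nb E y] = [set x; a; b].
  apply/setP => y; rewrite !inE; apply/andP/idP.
    case=> _ /eqP Hy; have : y \in nb E y by rewrite inE eqxx.
    by rewrite -Hy Hx !inE.
  case/orP => [/orP[]|] /eqP ->; rewrite ?Hx ?Ha ?Hb eqxx; split => //; apply/triP.
  - by exists a, b.
  - by exists x, b; rewrite (set2C a x).
  - by exists x, a; rewrite (set2C b x) (set2C b a).
by rewrite card3.
Qed.

Definition Cv n (E : graph n) v := (1 < deg E v) && ~~ tri E v.

Lemma pointwise n (E : graph n) v : simple_graph E -> P4_free E ->
  let d := deg E v in let T := (tri E v : nat) in let C := (Cv E v : nat) in
  [/\ 1 = (d == 0) + (d == 1) + T + C, d = (d == 1) + 2 * T + C * d,
      d * d = (d == 1) + 4 * T + C * (d * d), 2 * C <= C * d &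
      5 * (C * d) <= C * (d * d) + 6 * C].
Proof.
move=> sE pE d T C; rewrite /T /C /Cv -/d.
case t: (tri E v).
  by rewrite /d tri_deg.
rewrite /=; case: d => [|[|d]] //=; rewrite !mul1n; split => //; nia.
Qed.

Lemma center_leaf n (E : graph n) x y : simple_graph E -> P4_free E ->
  [set x; y] \in E -> Cv E x -> deg E y = 1.
Proof.
move=> sE pE xy /andP[dx tx].
have : 0 < deg E y by apply: (in_deg xy); rewrite !inE eqxx orbT.
case: (ltngtP (deg E y) 1) => // dy _.
by rewrite (factP sE pE xy dx dy) in tx.
Qed.

Lemma S_le_L n (E : graph n) : simple_graph E -> P4_free E ->
  \sum_v (Cv E v : nat) * deg E v <= \sum_v (deg E v == 1 : nat) * deg E v.
Proof.
move=> sE pE; rewrite !wshake; apply: leq_sum => e eE.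
have [x [y [xy He]]] := edge_form sE eE.
rewrite He !sum_set2 //.
have exy : [set x; y] \in E by rewrite -He.
have hy : Cv E x -> deg E y = 1 := center_leaf sE pE exy.
have eyx : [set y; x] \in E by rewrite set2C.
have hx : Cv E y -> deg E x = 1 := center_leaf sE pE eyx.
move: hx hy; rewrite /Cv; case: (tri E x); case: (tri E y);
  case: (deg E x) => [|[|dx]]; case: (deg E y) => [|[|dy]] //= hx hy;
  try (by have := hx isT); try (by have := hy isT).
Qed.

Lemma sq_mono m n c : m <= n -> c <= n + m -> m * m + c * n <= n * n + c * m.
Proof. move=> h1 h2. nia. Qed.

Lemma arith_main n q r a L Z k S Q m N :
  n = 3 * q + r -> 
  r < 3 -> n = Z + L + 3 * a + k -> 2 * m = L + 6 * a + S ->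
  2 * k <= S -> S <= L -> (k = 0 -> S = 0) -> 5 * S <= Q + 6 * k ->
  2 * N + L + 12 * a + Q = m * m + m ->
  2 * N <= (if n == 4 then 2 else
            if r == 2 then 9 * q * q - 3 * q else 9 * q * q - 9 * q).
Proof.
move=> en hr hn hm h1 h2 h3 h4 hN.
have [M eM] : exists M, M = m * m by eexists.
rewrite -eM in hN.
have i1 : 2 * N + 5 * m + 2 * Z <= M + 2 * n by lia.
have i2 : m + Z + k <= n by lia.
have i3 : 2 * N + m <= M by lia.
have i4 : 3 * a + k + n <= Z + 2 * m by lia.
have i5 : k = 0 -> 3 * a + n = Z + 2 * m by move=> k0; have := h3 k0; lia.
have i6 : 2 * N + 9 * m + 4 * Z <= M + 6 * a + 2 * k + 4 * n by lia.
clear hm h1 h2 h3 h4 hN hn.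
case: (ltnP (n + m) 7) => small.
  have m7 : m < 7 by lia.
  have q3 : q < 3 by lia.
  subst M n; move: i1 i2 i3 i4 i5 i6 small m7 q3 hr.
  case: m => [|[|[|[|[|[|[|m]]]]]]] //=; case: q => [|[|[|q]]] //=;
  case: r => [|[|[|r]]] //= *; lia.
have nn : n * n = 9 * (q * q) + 6 * (q * r) + r * r by rewrite en; nia.
have hcase : m + 2 <= n \/ m + 1 = n \/ m = n by lia.
case: hcase => [hle|[e1|e1]].
- have h := @sq_mono m (n-2) 5 (_ : m <= n - 2) (_ : 5 <= n - 2 + m).
  have K : (n - 2) * (n - 2) + 4 * n = n * n + 4 by nia.
  rewrite -eM in h.
  have n5 : 5 <= n by lia.
  case: r en hr nn => [|[|[|r]]] // en _ nn; rewrite ?muln0 ?muln1 in nn;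
  (have -> : (n == 4) = false by apply/eqP; lia); simpl; lia.
- have Mv : M + 2 * n = n * n + 1 by rewrite eM; nia.
  case: r en hr nn => [|[|[|r]]] // en _ nn; rewrite ?muln0 ?muln1 in nn;
  case: (eqVneq k 0) => [k0|k1]; try (have := i5 k0); try (case: (eqVneq n 4) => [n4|n4]); simpl; lia.
- have Mv : M = n * n by rewrite eM e1.
  case: r en hr nn => [|[|[|r]]] // en _ nn; rewrite ?muln0 ?muln1 in nn;
  (have k0 : k = 0 by lia); have := i5 k0; (have -> : (n == 4) = false by apply/eqP; lia); simpl; lia.
Qed.

Lemma upper n (E : graph n) : simple_graph E -> P4_free E ->
  2 * N_M2 E <= (if n == 4 then 2 else
     if n %% 3 == 2 then 9 * (n %/ 3) * (n %/ 3) - 3 * (n %/ 3)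
     else 9 * (n %/ 3) * (n %/ 3) - 9 * (n %/ 3)).
Proof.
move=> sE pE.
pose Z := \sum_v (deg E v == 0 : nat).
pose L := \sum_v (deg E v == 1 : nat).
pose t := \sum_v (tri E v : nat).
pose k := \sum_v (Cv E v : nat).
pose S := \sum_v (Cv E v : nat) * deg E v.
pose Q := \sum_v (Cv E v : nat) * (deg E v * deg E v).
have PW := fun v => pointwise v sE pE.
have hn : n = Z + L + t + k.
  rewrite -{1}(card_ord n) -sum1_card /Z /L /t /k -!big_split /=.
  by apply: eq_bigr => v _; case: (PW v).
have ht : 3 %| t.
  have -> : t = #|[set v | tri E v]|.
    rewrite -sum1_card big_mkcond /=; apply: eq_bigr => v _; by rewrite inE; case: (tri E v).
  exact: tri_card3.
have hdeg : \sum_v deg E v = 2 * #|E|.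
  transitivity (\sum_v 1 * deg E v); first by apply: eq_bigr => v _; rewrite mul1n.
  rewrite (wshake E (fun _ => 1)).
  transitivity (\sum_(e in E) 2).
    apply: eq_bigr => e eE; rewrite sum1_card.
    by move/forall_inP: sE => /(_ e eE) /eqP.
  by rewrite sum_nat_const mulnC.
have hm : 2 * #|E| = L + 2 * t + S.
  rewrite -hdeg /L /t /S big_distrr /= -!big_split /=.
  by apply: eq_bigr => v _; case: (PW v).
have hN : 2 * N_M2 E + L + 4 * t + Q = #|E| * #|E| + #|E|.
  rewrite -Dis_sum //.
  have -> : #|E| * #|E| + #|E| = #|E| * (#|E| + 1) by rewrite mulnDr muln1.
  rewrite -(sqdeg sE).
  suff H : L + 4 * t + Q = \sum_v deg E v * deg E v by rewrite -H [RHS]addnC !addnA.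
  rewrite /L /t /Q big_distrr /= -!big_split /=.
  by apply: eq_bigr => v _; case: (PW v).
have h1 : 2 * k <= S.
  rewrite /k big_distrr /=; apply: leq_sum => v _; by case: (PW v).
have h4 : 5 * S <= Q + 6 * k.
  rewrite /S /k !big_distrr /= -big_split /=; apply: leq_sum => v _; by case: (PW v).
have h2 : S <= L.
  apply: leq_trans (S_le_L sE pE) _; rewrite /L leq_eqVlt; apply/orP; left; apply/eqP.
  by apply: eq_bigr => v _; case: (deg E v) => [|[|]].
have h3 : k = 0 -> S = 0.
  move=> /eqP; rewrite /k sum_nat_eq0 => /forallP H; apply/eqP; rewrite /S sum_nat_eq0.
  by apply/forallP => v; have := H v; rewrite /=; case: (Cv E v).
have [a ea] : exists a, t = 3 * a by exists (t %/ 3); rewrite mulnC divnK.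
have en : n = 3 * (n %/ 3) + n %% 3 by rewrite {1}(divn_eq n 3) mulnC.
have hr : n %% 3 < 3 by rewrite ltn_mod.
have hn' : n = Z + L + 3 * a + k by rewrite {1}hn ea.
have hm' : 2 * #|E| = L + 6 * a + S by rewrite hm ea mulnA.
have hN' : 2 * N_M2 E + L + 12 * a + Q = #|E| * #|E| + #|E| by rewrite -hN ea mulnA.
exact: (@arith_main n (n %/ 3) (n %% 3) a L Z k S Q #|E| (N_M2 E) en hr hn' hm' h1 h2 h3 h4 hN').
Qed.

Lemma sum_const_on (m p c : nat) (F : nat -> nat) :
  (forall i, m <= i < p -> F i = c) -> \sum_(m <= i < p) F i = (p - m) * c.
Proof. by move=> H; rewrite (eq_big_nat _ _ H) sum_nat_const_nat. Qed.

Lemma blockcount n v : v < n ->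
  \sum_(0 <= u < n) ((u != v) && (u %/ 3 == v %/ 3) : nat) =
  minn n (3 * (v %/ 3) + 3) - 3 * (v %/ 3) - 1.
Proof.
move=> vn; set b := v %/ 3; set c := minn n (3 * b + 3).
have hb : 3 * b <= v by rewrite /b; lia.
have hv : v < 3 * b + 3 by rewrite /b; lia.
have vc : v < c by rewrite /c; lia.
have cn : c <= n by rewrite /c; lia.
rewrite (@big_cat_nat _ _ _ (3 * b)) //=; last by lia.
rewrite (@sum_const_on 0 (3 * b) 0); last first.
  move=> u /andP[_ hu]; have : u %/ 3 != b by apply/eqP; lia.
  by move/negbTE->; rewrite andbF.
rewrite muln0 add0n.
rewrite (@big_cat_nat _ _ _ c) //=; last by lia.
rewrite [X in _ + X](@sum_const_on c n 0); last first.
  move=> u /andP[h1 h2]; have : u %/ 3 != b by apply/eqP; rewrite /c in h1; lia.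
  by move/negbTE->; rewrite andbF.
rewrite muln0 addn0.
rewrite (@big_cat_nat _ _ _ v) //=; last by lia.
rewrite [X in _ + X](@big_cat_nat _ _ _ v.+1) //=.
rewrite big_nat1 eqxx /=.
rewrite (@sum_const_on (3 * b) v 1); last first.
  move=> u /andP[h1 h2]; have -> : u %/ 3 == b by apply/eqP; lia.
  by have -> : u != v by apply/eqP; lia.
rewrite (@sum_const_on v.+1 c 1); last first.
  move=> u /andP[h1 h2]; have -> : u %/ 3 == b by apply/eqP; rewrite /c in h2; lia.
  by have -> : u != v by apply/eqP; lia.
lia.
Qed.

Lemma deg_nbrs n (E : graph n) v : simple_graph E ->
  deg E v = #|[set u | [set v; u] \in E]|.
Proof.
move=> sE; rewrite /deg.
have -> : [set e in E | v \in e] = [set [set v; u] | u in [set u | [set v; u] \in E]].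
  apply/setP => e; rewrite inE; apply/andP/imsetP.
    case=> eE ve; have [u [uv He]] := edge_at sE eE ve.
    by exists u; rewrite // inE -He.
  by case=> u; rewrite inE => uE ->; rewrite !inE eqxx.
apply: card_in_imset => u u'; rewrite !inE => uE u'E H.
have : u \in [set v; u'] by rewrite -H !inE eqxx orbT.
rewrite !inE => /orP[]/eqP // uv.
by move: (edge_neq sE uE); rewrite uv eqxx.
Qed.

Lemma D_mem n (x y : 'I_n) :
  ([set x; y] \in D 3 n) = (x != y) && (x %/ 3 == y %/ 3).
Proof.
rewrite inE; apply/existsP/andP => [[i /existsP[j /and3P[ij qij /eqP H]]]|[xy q]].
  have xy : x != y.
    by move: (cards2 x y) (cards2 i j); rewrite H ij => -> []; case: (x != y).
  have : x \in [set i; j] by rewrite -H !inE eqxx.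
  have : y \in [set i; j] by rewrite -H !inE eqxx orbT.
  rewrite !inE => /orP[]/eqP e1 /orP[]/eqP e2; rewrite e1 e2 in xy *;
    rewrite ?eqxx // in xy; split => //; by rewrite eq_sym.
by exists x; apply/existsP; exists y; rewrite xy q eqxx.
Qed.

Lemma D_simple n : simple_graph (D 3 n).
Proof.
apply/forall_inP => e; rewrite inE => /existsP[i /existsP[j /and3P[ij _ /eqP ->]]].
by rewrite cards2 ij.
Qed.

Lemma D_P4free n : P4_free (D 3 n).
Proof.
apply/negP => /existsP[a /existsP[b /existsP[c /existsP[d /and4P[u e1 e2 e3]]]]].
move: u e1 e2 e3; rewrite !D_mem /= !inE !negb_or.
rewrite -!val_eqE /=.
move=> H1 H2 H3; move: H1 H2 H3.
case: (a %/ 3 =P b %/ 3); case: (b %/ 3 =P c %/ 3); case: (c %/ 3 =P d %/ 3);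
  rewrite ?andbF ?andbT //=.
move=> h1 h2 h3; case: eqP; case: eqP; case: eqP; case: eqP; case: eqP; case: eqP => //= *.
lia.
Qed.

Definition gD n v := minn n (3 * (v %/ 3) + 3) - 3 * (v %/ 3) - 1.

Lemma D_deg n (v : 'I_n) : deg (D 3 n) v = gD n v.
Proof.
rewrite deg_nbrs ?D_simple // /gD -(blockcount (ltn_ord v)).
rewrite -sum1_card big_mkcond /= big_mkord; apply: eq_bigr => u _.
rewrite inE D_mem eq_sym (eq_sym (v %/ 3)).
by case: ifP.
Qed.

Lemma D_sum n (h : nat -> nat) :
  \sum_(v < n) h (gD n v) = 3 * (n %/ 3) * h 2 + (n %% 3) * h (n %% 3 - 1).
Proof.
rewrite -(big_mkord xpredT (fun v => h (gD n v))).
rewrite (@big_cat_nat _ _ _ (3 * (n %/ 3))) //=; last by lia.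
rewrite (@sum_const_on 0 (3 * (n %/ 3)) (h 2)); last first.
  by move=> v /andP[_ hv]; congr h; rewrite /gD; lia.
rewrite (@sum_const_on (3 * (n %/ 3)) n (h (n %% 3 - 1))); last first.
  by move=> v /andP[h1 h2]; congr h; rewrite /gD; lia.
congr (_ * _ + _ * _); lia.
Qed.

Lemma handshake n (E : graph n) : simple_graph E -> \sum_v deg E v = 2 * #|E|.
Proof.
move=> sE.
transitivity (\sum_v 1 * deg E v); first by apply: eq_bigr => v _; rewrite mul1n.
rewrite (wshake E (fun _ => 1)).
transitivity (\sum_(e in E) 2).
  apply: eq_bigr => e eE; rewrite sum1_card.
  by move/forall_inP: sE => /(_ e eE) /eqP.
by rewrite sum_nat_const mulnC.
Qed.

Lemma D_N n : 2 * N_M2 (D 3 n) =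
  (if n %% 3 == 2 then 9 * (n %/ 3) * (n %/ 3) - 3 * (n %/ 3)
   else 9 * (n %/ 3) * (n %/ 3) - 9 * (n %/ 3)).
Proof.
have sD := D_simple n.
have h1 := handshake sD.
have h2 := sqdeg sD.
rewrite Dis_sum // in h2.
have h1' : 3 * (n %/ 3) * 2 + (n %% 3) * (n %% 3 - 1) = 2 * #|D 3 n|.
  by rewrite -h1 -(D_sum n id); apply: eq_bigr => v _; rewrite D_deg.
have h2' : 3 * (n %/ 3) * (2 * 2) + (n %% 3) * ((n %% 3 - 1) * (n %% 3 - 1))
   + 2 * N_M2 (D 3 n) = #|D 3 n| * (#|D 3 n| + 1).
  rewrite -h2 -(D_sum n (fun x => x * x)); congr (_ + _); apply: eq_bigr => v _; by rewrite D_deg.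
move: h1' h2'; clear h1 h2; set m := #|D 3 n|; set N := N_M2 (D 3 n); set q := n %/ 3.
have : n %% 3 < 3 by rewrite ltn_mod.
case: (n %% 3) => [|[|[|r]]] //= _ h1 h2; nia.
Qed.


Lemma matching_P4free n (E : graph n) :
  (forall e f, e \in E -> f \in E -> e != f -> [disjoint e & f]) -> P4_free E.
Proof.
move=> HE; apply/negP => /existsP[a /existsP[b /existsP[c /existsP[d /and4P[u e1 e2 e3]]]]].
case: (eqVneq [set a; b] [set b; c]) => [H|H].
  have : a \in [set b; c] by rewrite -H !inE eqxx.
  by move: u; rewrite /= !inE !negb_or => /andP[/and3P[/negbTE-> /negbTE-> _] _].
have := disjointFr (HE _ _ e1 e2 H) (_ : b \in [set a; b]).
by rewrite !inE eqxx orbT => /(_ isT).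
Qed.

Definition o0 : 'I_4 := Ordinal (isT : 0 < 4).
Definition o1 : 'I_4 := Ordinal (isT : 1 < 4).
Definition o2 : 'I_4 := Ordinal (isT : 2 < 4).
Definition o3 : 'I_4 := Ordinal (isT : 3 < 4).
Definition E4 : graph 4 := [set [set o0; o1]; [set o2; o3]].

Lemma E4_ne : [set o0; o1] != [set o2; o3].
Proof.
apply/eqP => H; have : o0 \in [set o2; o3] by rewrite -H !inE eqxx.
by rewrite !inE.
Qed.

Lemma E4_disj : [disjoint [set o0; o1] & [set o2; o3]].
Proof. by rewrite disj2 !inE. Qed.

Lemma E4_simple : simple_graph E4.
Proof. by apply/forall_inP => e; rewrite !inE => /orP[]/eqP ->; rewrite cards2. Qed.

Lemma E4_P4 : P4_free E4.
Proof.
apply: matching_P4free => e f; rewrite !inE => /orP[]/eqP -> /orP[]/eqP ->;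
  rewrite ?eqxx //= => _; by rewrite ?E4_disj // disjoint_sym E4_disj.
Qed.

Lemma E4_N : 0 < N_M2 E4.
Proof.
rewrite /N_M2 card_gt0; apply/set0Pn; exists E4; rewrite inE powersetE subxx /=.
rewrite cards2 E4_ne /=; apply/forall_inP => e; rewrite !inE => /orP[]/eqP -> ;
  apply/forall_inP => f; rewrite !inE => /orP[]/eqP ->;
  by rewrite ?eqxx //= ?E4_disj ?implybT // disjoint_sym E4_disj implybT.
Qed.

Theorem proposition3p6 :
  (forall n : nat, 0 < n -> n != 4 -> ex_M2_P4 n = N_M2 (D 3 n)) /\
  ex_M2_P4 4 = 1.
Proof.
split.
  move=> n _ n4; apply/eqP; rewrite eqn_leq; apply/andP; split.
    apply/bigmax_leqP => E /andP[sE pE].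
    have := upper sE pE; rewrite (negbTE n4) -D_N.
    by rewrite leq_pmul2l.
  by apply: (@leq_bigmax_cond _ (fun E : graph n => simple_graph E && P4_free E) (@N_M2 n) (D 3 n));
    rewrite D_simple D_P4free.
apply/eqP; rewrite eqn_leq; apply/andP; split.
  apply/bigmax_leqP => E /andP[sE pE].
  have := upper sE pE; rewrite eqxx.
  by move=> h; rewrite -(@leq_pmul2l 2) // muln1.
apply: leq_trans E4_N _.
by apply: (@leq_bigmax_cond _ (fun E : graph 4 => simple_graph E && P4_free E) (@N_M2 4) E4);
  rewrite E4_simple E4_P4.
Qed.
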